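(* Let $n\ge 6$ and let $T$ be a tree on $n$ vertices with maximum degree $n-3$. Then $\rho_{ABC}(T)<\sqrt{n-3.5}$.
   Context: For a simple connected graph $G$ with vertex set $\{v_1,\dots,v_n\}$ and degrees $d_i$, the ABC matrix is $M(G)=(m_{ij})_{n\times n}$ with $m_{ij}=\sqrt{(d_i+d_j-2)/(d_id_j)}$ if $v_iv_j$ is an edge and $m_{ij}=0$ otherwise. The ABC spectral radius $\rho_{ABC}(G)$ is the largest eigenvalue of $M(G)$. (The paper states this for its three trees $T_2,T_3,T_4$, which are exactly the trees on $n$ vertices with maximum degree $n-3$: a vertex of degree $n-3$ together with two further vertices attached either as two leaves at one neighbor, as leaves at two distinct neighbors, or as a path of length two hanging from one neighbor.) *)

(* Defs.v *)
From mathcomp Require Import all_boot all_order all_algebra.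
From mathcomp Require Import reals.
Set Implicit Arguments. Unset Strict Implicit. Unset Printing Implicit Defensive.
Import Order.TTheory GRing.Theory Num.Theory.
Local Open Scope ring_scope.

Definition simple_graph (n : nat) (e : rel 'I_n) : Prop :=
  symmetric e /\ irreflexive e.

Definition deg (n : nat) (e : rel 'I_n) (i : 'I_n) : nat := #|[set j | e i j]|.

Definition nedges (n : nat) (e : rel 'I_n) : nat :=
  #|[set p : 'I_n * 'I_n | e p.1 p.2 && (p.1 < p.2)%N]|.

Definition connected_graph (n : nat) (e : rel 'I_n) : Prop :=
  forall x y : 'I_n, connect e x y.

Definition is_tree (n : nat) (e : rel 'I_n) : Prop :=
  [/\ simple_graph e, connected_graph e & nedges e = n.-1].

Definition max_deg (n : nat) (e : rel 'I_n) : nat := \max_(i : 'I_n) deg e i.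

Definition ABC_matrix (R : realType) (n : nat) (e : rel 'I_n) : 'M[R]_n :=
  \matrix_(i < n, j < n)
    if e i j then
      Num.sqrt (((deg e i)%:R + (deg e j)%:R - 2) / ((deg e i)%:R * (deg e j)%:R))
    else 0.

(* Main.v *)
Require Import Defs.
From mathcomp Require Import all_boot all_order all_algebra.
From mathcomp Require Import reals.
From mathcomp Require Import zify ring lra.
Import Order.TTheory GRing.Theory Num.Theory.

Lemma card_nbr n (e : rel 'I_n) v : deg e v = \sum_j (e v j : nat).
Proof. by rewrite /deg cardsE -sum1_card big_mkcond. Qed.

Lemma handshake n (e : rel 'I_n) : simple_graph e -> \sum_v deg e v = 2 * nedges e.
Proof.
case=> sym irr.
have -> : nedges e = \sum_v \sum_j ((e v j) && (v < j)%N : nat).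
  rewrite /nedges cardsE -sum1_card big_mkcond /=.
  rewrite -(pair_big xpredT xpredT (fun v j => ((e v j) && (v < j)%N : nat))) /=.
  by apply: eq_bigr => -[a b] _.
have E : forall v j : 'I_n, (e v j : nat) = ((e v j) && (v < j)%N : nat) + ((e v j) && (j < v)%N : nat).
  move=> v j; case: (ltngtP v j) => h; case evj: (e v j) => //=.
  have /eqP hh : v == j by apply/eqP/val_inj.
  by rewrite hh irr in evj.
under eq_bigr do rewrite card_nbr.
rewrite (eq_bigr (fun v => \sum_j ((e v j) && (v < j)%N : nat) + \sum_j ((e v j) && (j < v)%N : nat))); last first.
  by move=> v _; rewrite -big_split /=; apply: eq_bigr => j _; rewrite E.
rewrite big_split /= mul2n -addnn; congr (_ + _).
rewrite exchange_big /=; apply: eq_bigr => v _; apply: eq_bigr => j _.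
by rewrite (sym j v).
Qed.

Lemma closed_all n (e : rel 'I_n) (S : {set 'I_n}) x :
  symmetric e -> connected_graph e -> x \in S ->
  (forall u w, u \in S -> e u w -> w \in S) -> (n <= #|S|)%N.
Proof.
move=> sym con xS cl.
have cl' : closed e (mem S).
  move=> u w euw; apply/idP/idP => h; first exact: cl euw.
  by apply: (cl w u) => //; rewrite sym.
suff -> : S = setT by rewrite cardsT card_ord.
apply/setP => y; rewrite inE.
by rewrite -(closed_connect cl' (con x y)).
Qed.

Lemma deg_pos n (e : rel 'I_n) v : (2 <= n)%N -> simple_graph e -> connected_graph e -> (1 <= deg e v)%N.
Proof.
move=> n2 [sym irr] con; rewrite lt0n; apply/negP => /eqP d0.
have : (n <= #|[set v]|)%N.
  apply: (@closed_all n e [set v] v sym con); first by rewrite inE.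
  move=> u w; rewrite inE => /eqP -> evw.
  have : w \in [set j | e v j] by rewrite inE.
  by move/card0_eq: d0 => ->.
by rewrite cards1; lia.
Qed.

Lemma maxdeg_le n (e : rel 'I_n) v : (deg e v <= max_deg e)%N.
Proof. exact: leq_bigmax. Qed.

Lemma maxdeg_ex n (e : rel 'I_n) : (0 < n)%N -> exists c, deg e c = max_deg e.
Proof.
move=> n0; have [c hc] := @bigop.eq_bigmax _ (deg e) (ltac:(by rewrite card_ord)).
by exists c; rewrite /max_deg hc.
Qed.

Lemma budget n (e : rel 'I_n) c : (6 <= n)%N -> is_tree e -> deg e c = (n - 3)%N ->
  \sum_(v | v != c) (deg e v).-1 = 2%N.
Proof.
move=> n6 [sg con ne] dc.
have hs := @handshake n e sg; rewrite ne in hs.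
rewrite (bigD1 c) //= dc in hs.
have dp : forall v, (1 <= deg e v)%N by move=> v; apply: (@deg_pos n e v _ sg con); lia.
have : \sum_(v | v != c) deg e v = \sum_(v | v != c) (deg e v).-1 + \sum_(v | v != c) 1.
  rewrite -big_split /=; apply: eq_bigr => v _; have := dp v; lia.
rewrite sum1_card cardC1 card_ord.
move=> h; rewrite h in hs; move: hs; rewrite -subn1; lia.
Qed.

Lemma budget_sub n (e : rel 'I_n) c (S : {set 'I_n}) :
  \sum_(v | v != c) (deg e v).-1 = 2%N -> c \notin S -> (\sum_(v in S) (deg e v).-1 <= 2)%N.
Proof.
move=> hb cS; rewrite -hb [X in (_ <= X)%N](bigID (mem S)) /=.
rewrite [X in (X <= _)%N](eq_bigl (fun v => (v != c) && (v \in S))); first exact: leq_addr.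
move=> v /=; case vS: (v \in S); rewrite ?andbF ?andbT //.
symmetry; apply/eqP => vc; by rewrite -vc vS in cS.
Qed.

Lemma sum2n n (f : 'I_n -> nat) a b : a != b -> \sum_(v in [set a; b]) f v = f a + f b.
Proof. by move=> ab; rewrite big_setU1 /= ?big_set1 // inE. Qed.

Lemma sum3n n (f : 'I_n -> nat) a b c : a != b -> a != c -> b != c ->
  \sum_(v in [set a; b; c]) f v = f a + f b + f c.
Proof.
by move=> ab ac bc; rewrite -setUA big_setU1 /= ?sum2n ?addnA // !inE negb_or ab ac.
Qed.

Lemma set_card_eq n (A B : {set 'I_n}) : A \subset B -> (#|B| <= #|A|)%N -> A = B.
Proof. by move=> sAB cBA; apply/eqP; rewrite eqEcard sAB cBA. Qed.

Lemma no_triangle n (e : rel 'I_n) c i j :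
  (6 <= n)%N -> is_tree e -> deg e c = (n - 3)%N ->
  e c i -> e c j -> e i j -> deg e i = 2%N -> deg e j = 2%N -> False.
Proof.
move=> n6 tr dc eci ecj eij di dj.
have hb := @budget n e c n6 tr dc.
case: tr => [[sym irr] con ne].
have dp : forall v, (1 <= deg e v)%N by move=> v; apply: (@deg_pos n e v _ (conj sym irr) con); lia.
have ic : i != c by apply/eqP => h; rewrite h irr in eci.
have jc : j != c by apply/eqP => h; rewrite h irr in ecj.
have ij : i != j by apply/eqP => h; rewrite h irr in eij.
pose S := c |: [set w | e c w].
have cS : (#|S| <= 1 + (n - 3))%N by rewrite -dc cardsU1 leq_add2r leq_b1.
suff : (n <= #|S|)%N by lia.
apply: (@closed_all n e S c sym con); first by rewrite !inE eqxx.
have Ni : [set w | e i w] = [set c; j].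
  apply/esym/set_card_eq; last by rewrite cards2 eq_sym jc -/(deg e i) di.
  by apply/subsetP => w; rewrite !inE => /orP[]/eqP->; rewrite ?eij // sym.
have Nj : [set w | e j w] = [set c; i].
  apply/esym/set_card_eq; last by rewrite cards2 eq_sym ic -/(deg e j) dj.
  by apply/subsetP => w; rewrite !inE => /orP[]/eqP->; rewrite // sym.
move=> u w; rewrite !inE => /orP[/eqP -> ->|ecu euw]; first by rewrite orbT.
have uc : u != c by apply/eqP => h; rewrite h irr in ecu.
case: (eqVneq u i) => [ui|ui].
  have : w \in [set w | e i w] by rewrite inE -ui.
  by rewrite Ni !inE => /orP[]/eqP->; rewrite ?eqxx ?ecj ?orbT.
case: (eqVneq u j) => [uj|uj].
  have : w \in [set w | e j w] by rewrite inE -uj.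
  by rewrite Nj !inE => /orP[]/eqP->; rewrite ?eqxx ?eci ?orbT.
have : (\sum_(v in [set i; j; u]) (deg e v).-1 <= 2)%N.
  apply: (@budget_sub n e c _ hb); rewrite !inE !negb_or !(eq_sym c) ic jc /=; exact: uc.
rewrite sum3n // 1?eq_sym //.
rewrite di dj /= => hu.
have du : deg e u = 1%N by have := dp u; lia.
have Nu : [set w | e u w] = [set c].
  apply/esym/set_card_eq; last by rewrite cards1 -/(deg e u) du.
  by apply/subsetP => z; rewrite !inE => /eqP ->; rewrite sym.
have : w \in [set w | e u w] by rewrite inE.
by rewrite Nu inE => /eqP ->; rewrite eqxx.
Qed.

Local Open Scope ring_scope.

Definition gw {R : realType} (k : nat) : R :=
  if k == 1%N then 1 else if k == 2%N then 3/2 else 9/4.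
Definition phiN {R : realType} (b a : nat) : R :=
  (b%:R + a%:R - 2) / (b%:R * a%:R) * gw b.

Lemma gw1 (R : realType) : gw 1%N = 1 :> R. Proof. by []. Qed.
Lemma gw2 (R : realType) : gw 2%N = 3/2 :> R. Proof. by []. Qed.
Lemma gwD (R : realType) (D : nat) : (3 <= D)%N -> gw D = 9/4 :> R.
Proof.
move=> D3; rewrite /gw.
have -> : (D == 1)%N = false by apply/negbTE; rewrite neq_ltn; apply/orP; right; lia.
have -> : (D == 2)%N = false by apply/negbTE; rewrite neq_ltn; apply/orP; right; lia.
by [].
Qed.
Lemma gw_pos (R : realType) k : 0 < gw k :> R.
Proof. rewrite /gw; case: ifP => _; last case: ifP => _; lra. Qed.
Lemma gw_le (R : realType) k : gw k <= 9/4 :> R.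
Proof. rewrite /gw; case: ifP => _; last case: ifP => _; lra. Qed.

Lemma Dnz (R : realType) (D : nat) : (1 <= D)%N -> (D%:R : R) != 0.
Proof. by move=> D1; rewrite pnatr_eq0 -lt0n. Qed.

Lemma tfacts (R : realType) (D : nat) : (3 <= D)%N ->
  0 < (D%:R : R)^-1 /\ (D%:R : R)^-1 <= 1/3 /\ (D%:R : R) * (D%:R)^-1 = 1.
Proof.
move=> D3; have D3r : (3 : R) <= D%:R by rewrite (ler_nat R 3 D).
have tp : 0 < (D%:R : R)^-1 by rewrite invr_gt0; lra.
have Dt : (D%:R : R) * (D%:R)^-1 = 1 by rewrite mulfV // Dnz //; lia.
split => //; split => //; nra.
Qed.

Ltac phic D3 := rewrite /phiN ?gwD //= /gw /=; field; rewrite ?Dnz //; lia.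

Lemma phi_1D (R : realType) D : (3 <= D)%N -> phiN 1%N D = 1 - (D%:R : R)^-1.
Proof. move=> D3; rewrite /phiN /gw /=; field; rewrite Dnz //; lia. Qed.
Lemma phi_2D (R : realType) D : (3 <= D)%N -> phiN 2%N D = 3/4 :> R.
Proof. move=> D3; rewrite /phiN /gw /=; field; rewrite Dnz //; lia. Qed.
Lemma phi_3D (R : realType) D : (3 <= D)%N -> phiN 3%N D = 3/4 + 3/4 * (D%:R : R)^-1.
Proof. move=> D3; rewrite /phiN /gw /=; field; rewrite Dnz //; lia. Qed.
Lemma phi_D1 (R : realType) D : (3 <= D)%N -> phiN D 1%N = 9/4 * (1 - (D%:R : R)^-1).
Proof. move=> D3; rewrite /phiN gwD //; field; rewrite Dnz //; lia. Qed.
Lemma phi_D2 (R : realType) D : (3 <= D)%N -> phiN D 2%N = 9/8 :> R.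
Proof. move=> D3; rewrite /phiN gwD //; field; rewrite Dnz //; lia. Qed.
Lemma phi_D3 (R : realType) D : (3 <= D)%N -> phiN D 3%N = 3/4 + 3/4 * (D%:R : R)^-1.
Proof. move=> D3; rewrite /phiN gwD //; field; rewrite Dnz //; lia. Qed.
Lemma phi_12 (R : realType) : phiN 1%N 2%N = 1/2 :> R. Proof. by rewrite /phiN /gw /=; field. Qed.
Lemma phi_22 (R : realType) : phiN 2%N 2%N = 3/4 :> R. Proof. by rewrite /phiN /gw /=; field. Qed.
Lemma phi_13 (R : realType) : phiN 1%N 3%N = 2/3 :> R. Proof. by rewrite /phiN /gw /=; field. Qed.
Lemma phi_21 (R : realType) : phiN 2%N 1%N = 3/4 :> R. Proof. by rewrite /phiN /gw /=; field. Qed.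
Lemma phi_31 (R : realType) : phiN 3%N 1%N = 3/2 :> R. Proof. by rewrite /phiN /gw /=; field. Qed.
Lemma phi_b2 (R : realType) b : (1 <= b)%N -> phiN b 2%N = gw b / 2 :> R.
Proof. move=> b1; rewrite /phiN; field; rewrite Dnz //. Qed.
Lemma phi_le (R : realType) b a : (1 <= b)%N -> (1 <= a)%N -> phiN b a <= 9/4 :> R.
Proof.
move=> b1 a1; rewrite /phiN.
have br : (1 : R) <= b%:R by rewrite (ler_nat R 1 b).
have ar : (1 : R) <= a%:R by rewrite (ler_nat R 1 a).
have h : (b%:R + a%:R - 2) / (b%:R * a%:R) <= 1 :> R.
  rewrite ler_pdivrMr; last nra.
  nra.
have h0 : 0 <= (b%:R + a%:R - 2) / (b%:R * a%:R) :> R.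
  apply: divr_ge0; nra.
have := gw_le R b; have := gw_pos R b; nra.
Qed.

Lemma sum_le_const (R : realType) n (A : {set 'I_n}) (f : 'I_n -> R) B :
  (forall k, k \in A -> f k <= B) -> \sum_(k in A) f k <= #|A|%:R * B.
Proof.
move=> h; apply: le_trans (ler_sum _ h) _.
by rewrite sumr_const mulr_natl.
Qed.

Lemma sum_bound_in (R : realType) n (A : {set 'I_n}) (f : 'I_n -> R) c B :
  c \in A -> (forall k, k \in A -> k != c -> f k <= B) ->
  \sum_(k in A) f k <= (#|A|%:R - 1) * B + f c.
Proof.
move=> cA h; rewrite (bigD1 c) //= addrC lerD2r.
rewrite (eq_bigl (fun k => k \in A :\ c)); last by move=> k; rewrite in_setD1 andbC.
have -> : (#|A|%:R - 1 : R) = #|A :\ c|%:R.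
  rewrite (cardsD1 c A) cA natrD /=; lra.
apply: sum_le_const => k; rewrite in_setD1 => /andP[kc kA]; exact: h.
Qed.

Lemma sum_bound_gen (R : realType) n (A : {set 'I_n}) (f : 'I_n -> R) c B Bc :
  (1 <= #|A|)%N -> (forall k, k \in A -> k != c -> f k <= B) ->
  (c \in A -> f c <= Bc) -> B <= Bc ->
  \sum_(k in A) f k <= (#|A|%:R - 1) * B + Bc.
Proof.
move=> A1 h hc BB; case cA: (c \in A).
  apply: le_trans (@sum_bound_in R n A f c B cA h) _; rewrite lerD2l; exact: hc.
apply: le_trans (@sum_le_const R n A f B _) _.
  by move=> k kA; apply: h => //; apply/eqP => kc; rewrite -kc kA in cA.
have : (1 : R) <= #|A|%:R by rewrite (ler_nat R 1).
nra.
Qed.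

Set Implicit Arguments. Unset Strict Implicit.

Record GH n (e : rel 'I_n) (c : 'I_n) : Prop := {
  gh_sym : symmetric e;
  gh_irr : irreflexive e;
  gh_n : (6 <= n)%N;
  gh_dc : deg e c = (n - 3)%N;
  gh_dp : forall v, (1 <= deg e v)%N;
  gh_bud : \sum_(v | v != c) (deg e v).-1 = 2%N;
  gh_tri : forall i j, e c i -> e c j -> e i j -> deg e i = 2%N -> deg e j = 2%N -> False }.

Definition Nb n (e : rel 'I_n) v := [set w | e v w].

Lemma inNb n (e : rel 'I_n) v w : (w \in Nb e v) = e v w.
Proof. by rewrite inE. Qed.
Lemma cardNb n (e : rel 'I_n) v : #|Nb e v| = deg e v.
Proof. by []. Qed.



Lemma gh_neq n e c v w : @GH n e c -> e v w -> v != w.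
Proof. by move=> [_ irr _ _ _ _ _] evw; apply/eqP => h; rewrite h irr in evw. Qed.

Lemma gh_sub n e c (S : {set 'I_n}) : @GH n e c -> c \notin S ->
  (\sum_(v in S) (deg e v).-1 <= 2)%N.
Proof. by move=> G; apply: budget_sub (gh_bud G). Qed.

Lemma gh_x1 n e c v : @GH n e c -> v != c -> ((deg e v).-1 <= 2)%N.
Proof.
move=> G vc; have := @gh_sub n e c [set v] G; rewrite big_set1; apply.
by rewrite inE eq_sym.
Qed.

Lemma gh_deg3 n e c v : @GH n e c -> v != c -> (1 <= deg e v <= 3)%N.
Proof. move=> G vc; have := gh_x1 G vc; have := gh_dp G v; lia. Qed.

Lemma gh_x2 n e c v w : @GH n e c -> v != c -> w != c -> v != w ->
  ((deg e v).-1 + (deg e w).-1 <= 2)%N.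
Proof.
move=> G vc wc vw; have := @gh_sub n e c [set v; w] G; rewrite sum2n //; apply.
by rewrite !inE negb_or !(eq_sym c) vc wc.
Qed.

Lemma gh_x3 n e c u v w : @GH n e c -> u != c -> v != c -> w != c -> u != v -> u != w -> v != w ->
  ((deg e u).-1 + (deg e v).-1 + (deg e w).-1 <= 2)%N.
Proof.
move=> G uc vc wc uv uw vw; have := @gh_sub n e c [set u; v; w] G; rewrite sum3n //; apply.
by rewrite !inE !negb_or !(eq_sym c) uc vc wc.
Qed.

Lemma gh_sumNc n e c : @GH n e c -> (\sum_(v in Nb e c) (deg e v).-1 <= 2)%N.
Proof.
move=> G; apply: (gh_sub G); by rewrite inNb (gh_irr G).
Qed.

Lemma gh_sumNi n e c i : @GH n e c -> i != c -> c \notin Nb e i ->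
  ((deg e i).-1 + \sum_(v in Nb e i) (deg e v).-1 <= 2)%N.
Proof.
move=> G ic cNi; have := @gh_sub n e c (i |: Nb e i) G.
rewrite big_setU1 /=; first apply.
  by rewrite !inE negb_or eq_sym ic -inNb.
by rewrite inNb (gh_irr G).
Qed.

Lemma leaf_nb n e c i j : @GH n e c -> deg e j = 1%N -> e j i -> Nb e j = [set i].
Proof.
move=> G dj eji; apply/esym/set_card_eq; last by rewrite cards1 cardNb dj.
by apply/subsetP => z; rewrite !inE => /eqP ->.
Qed.

Lemma gh_dcle n e c v : @GH n e c -> (deg e v <= n - 3)%N.
Proof.
move=> G; case: (eqVneq v c) => [->|vc]; first by rewrite (gh_dc G).
have := gh_deg3 G vc; have := gh_n G; lia.
Qed.

Definition Wt (R : realType) n (e : rel 'I_n) j : R :=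
  \sum_(k in Nb e j) phiN (deg e k) (deg e j).

Lemma deg_cases d : (1 <= d <= 3)%N -> d = 1%N \/ d = 2%N \/ d = 3%N.
Proof. lia. Qed.

Lemma sumx_R (R : realType) n (A : {set 'I_n}) (e : rel 'I_n) :
  \sum_(k in A) ((deg e k).-1)%:R = (\sum_(k in A) (deg e k).-1)%:R :> R.
Proof. by rewrite natr_sum. Qed.

Lemma Wc_bound (R : realType) n e c : @GH n e c ->
  Wt R e c <= ((n - 3)%N%:R) - 2/3.
Proof.
move=> G; have D3 : (3 <= n - 3)%N by have := gh_n G; lia.
have [tp [t3 Dt]] := @tfacts R _ D3.
set t := ((n - 3)%N%:R : R)^-1 in tp t3 Dt *.
set Dr := ((n - 3)%N%:R : R) in Dt *.
rewrite /Wt (gh_dc G).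
have per : forall k, k \in Nb e c -> phiN (deg e k) (n - 3) <= (1 - t) + ((deg e k).-1)%:R / 6 :> R.
  move=> k; rewrite inNb => eck.
  have kc : k != c by rewrite eq_sym; exact: gh_neq G eck.
  have := deg_cases (gh_deg3 G kc) => -[->|[->|->]] /=.
  - rewrite phi_1D // -/t; lra.
  - rewrite phi_2D //; lra.
  - rewrite phi_3D // -/t; lra.
apply: le_trans (ler_sum _ per) _.
rewrite big_split /= sumr_const cardNb (gh_dc G) -mulr_suml sumx_R mulr_natl -/Dr.
have s2 : ((\sum_(k in Nb e c) (deg e k).-1)%N%:R : R) <= 2.
  by rewrite (ler_nat R _ 2); exact: gh_sumNc G.
rewrite -[_ *+ (n - 3)]mulr_natr -[_ *+ (\sum_(k in Nb e c) _)]mulr_natr -/Dr.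
have E : (1 - t) * Dr = Dr - 1 by rewrite mulrBl mul1r mulrC Dt.
rewrite E; lra.
Qed.

Lemma Wnc_bound (R : realType) n e c j : @GH n e c -> e c j ->
  Wt R e j <= 9/4 * (1 - ((n - 3)%N%:R)^-1) + ((deg e j).-1)%:R / 2.
Proof.
move=> G ecj; have D3 : (3 <= n - 3)%N by have := gh_n G; lia.
have [tp [t3 Dt]] := @tfacts R _ D3.
set t := ((n - 3)%N%:R : R)^-1 in tp t3 Dt *.
have jc : j != c by rewrite eq_sym; exact: gh_neq G ecj.
have cj : c \in Nb e j by rewrite inNb (gh_sym G).
rewrite /Wt; have := deg_cases (gh_deg3 G jc) => -[dj|[dj|dj]]; rewrite dj.
- apply: le_trans (@sum_bound_in R n (Nb e j) _ c (9/4) cj _) _.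
    move=> k kN _. apply: phi_le => //; exact: (gh_dp G).
  rewrite cardNb dj (gh_dc G) phi_D1 // -/t /=; lra.
- apply: le_trans (@sum_bound_in R n (Nb e j) _ c (3/4) cj _) _.
    move=> k; rewrite inNb => ejk kc.
    have := gh_x2 G jc kc (gh_neq G ejk); rewrite dj /= => hk.
    have dk := gh_dp G k; have : (deg e k = 1 \/ deg e k = 2)%N by lia.
    by move=> -[->|->]; rewrite ?phi_12 ?phi_22; lra.
  rewrite cardNb dj (gh_dc G) phi_D2 //= -/t; lra.
- apply: le_trans (@sum_bound_in R n (Nb e j) _ c (2/3) cj _) _.
    move=> k; rewrite inNb => ejk kc.
    have := gh_x2 G jc kc (gh_neq G ejk); rewrite dj /= => hk.
    have dk := gh_dp G k; have -> : (deg e k = 1)%N by lia.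
    by rewrite phi_13; lra.
  rewrite cardNb dj (gh_dc G) phi_D3 //= -/t; lra.
Qed.

Lemma Wgen_bound (R : realType) n e c j : @GH n e c -> j != c -> Wt R e j <= 7/3.
Proof.
move=> G jc; have D3 : (3 <= n - 3)%N by have := gh_n G; lia.
have [tp [t3 Dt]] := @tfacts R _ D3.
set t := ((n - 3)%N%:R : R)^-1 in tp t3 Dt *.
have N1 : (1 <= #|Nb e j|)%N by rewrite cardNb; apply: (gh_dp G j).
rewrite /Wt; have := deg_cases (gh_deg3 G jc) => -[dj|[dj|dj]]; rewrite dj.
- apply: le_trans (@sum_bound_gen R n (Nb e j) _ c (9/4) (9/4) N1 _ _ _) _.
  + move=> k kN _; apply: phi_le => //; exact: (gh_dp G).
  + move=> _; apply: phi_le => //; exact: (gh_dp G).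
  + lra.
  + rewrite cardNb dj /=; lra.
- apply: le_trans (@sum_bound_gen R n (Nb e j) _ c (9/8) (9/8) N1 _ _ _) _.
  + move=> k kN _; rewrite phi_b2; last exact: (gh_dp G k).
    have := gw_le R (deg e k); lra.
  + move=> _; rewrite phi_b2; last exact: (gh_dp G c).
    have := gw_le R (deg e c); lra.
  + lra.
  + rewrite cardNb dj /=; lra.
- apply: le_trans (@sum_bound_gen R n (Nb e j) _ c (2/3) 1 N1 _ _ _) _.
  + move=> k; rewrite inNb => ejk kc.
    have := gh_x2 G jc kc (gh_neq G ejk); rewrite dj /= => hk.
    have dk := gh_dp G k; have -> : (deg e k = 1)%N by lia.
    by rewrite phi_13; lra.
  + by move=> _; rewrite (gh_dc G) phi_D3 // -/t; lra.
  + lra.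
  + rewrite cardNb dj /=; lra.
Qed.

Lemma Wleaf (R : realType) n e c i j : @GH n e c -> deg e j = 1%N -> e j i ->
  Wt R e j = phiN (deg e i) 1%N.
Proof. by move=> G dj eji; rewrite /Wt (leaf_nb G dj eji) big_set1 dj. Qed.

Lemma W2_bound (R : realType) n e c i j : @GH n e c -> i != c -> deg e i = 2%N ->
  e i j -> j != c -> Wt R e j <= 3/4 + 9/8 * ((deg e j).-1)%:R.
Proof.
move=> G ic di eij jc.
have := gh_x2 G ic jc (gh_neq G eij); rewrite di /= => hj.
have eji : e j i by rewrite (gh_sym G).
have : (deg e j = 1 \/ deg e j = 2)%N by have dk := gh_dp G j; lia.
move=> -[dj|dj].
  rewrite (Wleaf R G dj eji) di phi_21 dj /=; lra.
have iN : i \in Nb e j by rewrite inNb.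
rewrite /Wt; apply: le_trans (@sum_bound_in R n (Nb e j) _ i (9/8) iN _) _.
  move=> k kN _; rewrite dj phi_b2; last exact: (gh_dp G k).
  have := gw_le R (deg e k); lra.
rewrite cardNb dj di phi_22 /=; lra.
Qed.

Lemma W2c_bound (R : realType) n e c i j : @GH n e c -> i != c -> deg e i = 2%N ->
  e c i -> e i j -> j != c -> Wt R e j <= 5/4.
Proof.
move=> G ic di eci eij jc.
have := gh_x2 G ic jc (gh_neq G eij); rewrite di /= => hj.
have eji : e j i by rewrite (gh_sym G).
have : (deg e j = 1 \/ deg e j = 2)%N by have dk := gh_dp G j; lia.
move=> -[dj|dj].
  rewrite (Wleaf R G dj eji) di phi_21; lra.
have iN : i \in Nb e j by rewrite inNb.
rewrite /Wt; apply: le_trans (@sum_bound_in R n (Nb e j) _ i (1/2) iN _) _.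
  move=> k; rewrite inNb => ejk ki.
  have kc : k != c.
    apply/eqP => kc; rewrite kc in ejk.
    apply: (gh_tri G eci _ eij di dj); by rewrite (gh_sym G).
  have := gh_x3 G ic jc kc (gh_neq G eij) (ltac:(by rewrite eq_sym)) (gh_neq G ejk).
  rewrite di dj /= => hk.
  have dk := gh_dp G k; have -> : (deg e k = 1)%N by lia.
  by rewrite phi_12; lra.
rewrite cardNb dj di phi_22 /=; lra.
Qed.

Definition Rt (R : realType) n (e : rel 'I_n) i : R :=
  (gw (deg e i))^-1 * \sum_(j in Nb e i) Wt R e j.

Lemma Rt_bound (R : realType) n e c i : @GH n e c ->
  Rt R e i < ((n - 3)%N%:R) - 1/2.
Proof.
move=> G; have D3 : (3 <= n - 3)%N by have := gh_n G; lia.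
have [tp [t3 Dt]] := @tfacts R _ D3.
set t := ((n - 3)%N%:R : R)^-1 in tp t3 Dt *.
set Dr := ((n - 3)%N%:R : R) in Dt *.
have D3r : 3 <= Dr by rewrite /Dr (ler_nat R 3).
have Wc := Wc_bound R G; rewrite -/Dr in Wc.
rewrite /Rt; case: (eqVneq i c) => [->|ic].
  rewrite (gh_dc G) gwD //.
  have per : forall j, j \in Nb e c -> Wt R e j <= 9/4 * (1 - t) + ((deg e j).-1)%:R / 2.
    by move=> j; rewrite inNb => ecj; exact: Wnc_bound G ecj.
  have : \sum_(j in Nb e c) Wt R e j <= \sum_(j in Nb e c) (9/4 * (1 - t) + ((deg e j).-1)%:R / 2) := ler_sum _ per.
  rewrite big_split /= sumr_const cardNb (gh_dc G) -mulr_suml sumx_R.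
  rewrite -[_ *+ (n - 3)]mulr_natr -[_ *+ (\sum_(k in Nb e c) _)]mulr_natr -/Dr.
  have s2 : ((\sum_(k in Nb e c) (deg e k).-1)%N%:R : R) <= 2.
    by rewrite (ler_nat R _ 2); exact: gh_sumNc G.
  have E : 9/4 * (1 - t) * Dr = 9/4 * (Dr - 1).
    by rewrite -mulrA mulrBl mul1r [t * Dr]mulrC Dt.
  rewrite E => h.
  have -> : (9/4 : R)^-1 = 4/9 by field.
  lra.
have N1 : (1 <= #|Nb e i|)%N by rewrite cardNb; apply: (gh_dp G i).
have := deg_cases (gh_deg3 G ic) => -[di|[di|di]]; rewrite di.
-
  rewrite gw1 invr1 mul1r.
  apply: le_lt_trans (@sum_bound_gen R n (Nb e i) _ c (7/3) (Dr - 2/3) N1 _ _ _) _.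
  + by move=> j _ jc; exact: Wgen_bound G jc.
  + by move=> _.
  + lra.
  + rewrite cardNb di /=; lra.
-
  rewrite gw2.
  have -> : (3/2 : R)^-1 = 2/3 by field.
  case cN: (c \in Nb e i).
    have eci : e c i by rewrite (gh_sym G) -inNb.
    have := @sum_bound_in R n (Nb e i) (Wt R e) c (5/4) cN.
    move=> /(_ _) h.
    have {}h : \sum_(j in Nb e i) Wt R e j <= (#|Nb e i|%:R - 1) * (5/4) + Wt R e c.
      apply: h => j; rewrite inNb => eij jc; exact: W2c_bound G ic di eci eij jc.
    move: h; rewrite cardNb di /= => h; lra.
  have per : forall j, j \in Nb e i -> Wt R e j <= 3/4 + 9/8 * ((deg e j).-1)%:R.
    move=> j; rewrite inNb => eij.
    have jc : j != c by apply/eqP => jc; rewrite -jc inNb eij in cN.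
    exact: W2_bound G ic di eij jc.
  have : \sum_(j in Nb e i) Wt R e j <= \sum_(j in Nb e i) (3/4 + 9/8 * ((deg e j).-1)%:R) := ler_sum _ per.
  rewrite big_split /= sumr_const cardNb di -mulr_sumr sumx_R => h.
  have s1 : ((\sum_(k in Nb e i) (deg e k).-1)%N%:R : R) <= 1.
    have := gh_sumNi G ic (negbT cN); rewrite di /= => hs.
    by rewrite (ler_nat R _ 1); lia.
  move: h; rewrite /=; lra.
-
  rewrite gwD //.
  have -> : (9/4 : R)^-1 = 4/9 by field.
  have h := @sum_bound_gen R n (Nb e i) (Wt R e) c (3/2) (Dr - 2/3) N1.
  have {}h : \sum_(j in Nb e i) Wt R e j <= (#|Nb e i|%:R - 1) * (3/2) + (Dr - 2/3).
    apply: h => //; last lra.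
    move=> j; rewrite inNb => eij jc.
    have := gh_x2 G ic jc (gh_neq G eij); rewrite di /= => hj.
    have dj : deg e j = 1%N by have := gh_dp G j; lia.
    rewrite (Wleaf R G dj (_ : e j i)) ?di ?phi_31 //; by rewrite (gh_sym G).
  move: h; rewrite cardNb di /= => h; lra.
Qed.

Lemma CSw (R : realType) n (A : {set 'I_n}) (a b g : 'I_n -> R) :
  (forall k, k \in A -> 0 < g k) ->
  (\sum_(k in A) a k * b k) ^+ 2 <=
  (\sum_(k in A) a k ^+ 2 * g k) * (\sum_(k in A) b k ^+ 2 / g k).
Proof.
move=> gp.
set P := \sum_(k in A) a k ^+ 2 * g k.
set Q := \sum_(k in A) b k ^+ 2 / g k.
set S := \sum_(k in A) a k * b k.
have P0 : 0 <= P by apply: sumr_ge0 => k kA; have := gp k kA; nra.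
have Q0 : 0 <= Q.
  apply: sumr_ge0 => k kA; have := gp k kA => gk.
  by apply: divr_ge0; [exact: sqr_ge0|lra].
have [Pz|Pp] := eqVneq P 0.
  have ak : forall k, k \in A -> a k = 0.
    move=> k kA; have := psumr_eq0P (P := mem A) (F := fun k => a k ^+ 2 * g k) _ Pz kA.
    move=> /(_ _) h; have {}h := h (fun i iA => ltac:(have := gp i iA; nra)).
    have gk := gp k kA; by move/eqP: h; rewrite mulf_eq0 (gt_eqF gk) orbF sqrf_eq0 => /eqP.
  have -> : S = 0 by rewrite /S big1 // => i iA; rewrite ak // mul0r.
  rewrite expr0n /=; nra.
have Ppos : 0 < P by rewrite lt_def Pp P0.
pose t := S / P.
have key : \sum_(k in A) g k * (t * a k - b k / g k) ^+ 2 = t ^+ 2 * P - 2 * t * S + Q.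
  rewrite /P /Q /S mulr_sumr mulr_sumr -sumrB -big_split /=.
  apply: eq_bigr => k kA; have := gp k kA => gk.
  field; lra.
have h0 : 0 <= t ^+ 2 * P - 2 * t * S + Q.
  rewrite -key; apply: sumr_ge0 => k kA; have := gp k kA => gk.
  apply: mulr_ge0; [lra|exact: sqr_ge0].
have e2 : P * (t ^+ 2 * P - 2 * t * S + Q) = P * Q - S ^+ 2.
  rewrite /t; field; exact: Pp.
have : 0 <= P * (t ^+ 2 * P - 2 * t * S + Q) by apply: mulr_ge0.
rewrite e2; lra.
Qed.

Definition qq (R : realType) n (e : rel 'I_n) k j : R :=
  ((deg e k)%:R + (deg e j)%:R - 2) / ((deg e k)%:R * (deg e j)%:R).

Lemma qq_ge0 (R : realType) n e c k j : @GH n e c -> 0 <= qq R e k j.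
Proof.
move=> G; rewrite /qq.
have hk : (1 : R) <= (deg e k)%:R by rewrite (ler_nat R 1); exact: gh_dp G k.
have hj : (1 : R) <= (deg e j)%:R by rewrite (ler_nat R 1); exact: gh_dp G j.
apply: divr_ge0; nra.
Qed.

Lemma exch_nb (R : realType) n (e : rel 'I_n) (H : 'I_n -> 'I_n -> R) : symmetric e ->
  \sum_j \sum_(k in Nb e j) H j k = \sum_k \sum_(j in Nb e k) H j k.
Proof.
move=> sym.
under eq_bigr do rewrite big_mkcond.
rewrite exchange_big /=; apply: eq_bigr => k _.
rewrite [RHS]big_mkcond; apply: eq_bigr => j _.
by rewrite !inNb sym.
Qed.

Lemma quad (R : realType) n e c (v : 'rV[R]_n) a : @GH n e c ->
  v *m ABC_matrix R e = a *: v ->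
  a ^+ 2 * \sum_j v 0 j ^+ 2 <= \sum_k v 0 k ^+ 2 * Rt R e k.
Proof.
move=> G Hv.
have step : forall j, (a * v 0 j) ^+ 2 <=
    Wt R e j * \sum_(k in Nb e j) v 0 k ^+ 2 / gw (deg e k).
  move=> j.
  have Ej : a * v 0 j = \sum_(k in Nb e j) Num.sqrt (qq R e k j) * v 0 k.
    have := congr1 (fun M : 'M[R]_(1, n) => M 0 j) Hv; rewrite !mxE => <-.
    rewrite (bigID (mem (Nb e j))) /= [X in _ + X]big1 ?addr0.
      apply: eq_bigr => k kN; rewrite mxE.
      have -> : e k j by rewrite (gh_sym G) -inNb.
      by rewrite mulrC.
    move=> k kN; rewrite mxE.
    have -> : e k j = false by rewrite (gh_sym G) -inNb; apply/negbTE.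
    by rewrite mulr0.
  rewrite Ej.
  have W : Wt R e j = \sum_(k in Nb e j) Num.sqrt (qq R e k j) ^+ 2 * gw (deg e k).
    rewrite /Wt; apply: eq_bigr => k _.
    rewrite sqr_sqrtr; last exact: (qq_ge0 R k j G). by rewrite /phiN /qq.
  rewrite W; apply: CSw => k _; exact: gw_pos.
have h : \sum_j (a * v 0 j) ^+ 2 <= \sum_j (Wt R e j * \sum_(k in Nb e j) v 0 k ^+ 2 / gw (deg e k)).
  by apply: ler_sum => j _; exact: step.
move: h; rewrite (eq_bigr (fun j => a ^+ 2 * v 0 j ^+ 2)); last by move=> j _; rewrite exprMn.
rewrite -mulr_sumr => h; apply: le_trans h _.
under eq_bigr do rewrite mulr_sumr.
rewrite (exch_nb _ (gh_sym G)); apply: ler_sum => k _.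
rewrite /Rt -mulr_suml.
rewrite le_eqVlt; apply/orP; left; apply/eqP; ring.
Qed.

Unset Implicit Arguments. Set Strict Implicit.

Theorem lemma3p4 (R : realType) (n : nat) (e : rel 'I_n) :
  (6 <= n)%N -> is_tree e -> max_deg e = (n - 3)%N ->
  forall a : R, eigenvalue (ABC_matrix R e) a -> a < Num.sqrt (n%:R - 7%:R / 2%:R).
Proof.
move=> n6 tr md a /eigenvalueP [v Hv v0].
have [c dc] := @maxdeg_ex n e (ltac:(lia)); rewrite md in dc.
have G : GH e c.
  have tr' := tr; case: tr' => [[sym irr] con ne].
  split => //.
  - by move=> w; apply: (@deg_pos n e w _ (conj sym irr) con); lia.
  - exact: (@budget n e c n6 tr dc).
  - by move=> i j eci ecj eij di dj; exact: (@no_triangle n e c i j n6 tr dc eci ecj eij di dj).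
have hq := quad G Hv.
have [k0 vk0] : exists k, v 0 k != 0.
  case: (pickP (fun k => v 0 k != 0)) => [k hk|hn]; first by exists k.
  exfalso; move/negP: v0; apply; apply/eqP/matrixP => i j; rewrite (ord1 i) !mxE.
  by have := hn j; rewrite /=; move/negbFE/eqP.
set B : R := (n - 3)%N%:R - 1/2.
have hR := fun k => Rt_bound R k G; rewrite -/B in hR.
have Sp : 0 < \sum_j v 0 j ^+ 2.
  rewrite (bigD1 k0) //= ltr_wpDr //; first by apply: sumr_ge0 => j _; exact: sqr_ge0.
  by rewrite lt_def sqrf_eq0 vk0 sqr_ge0.
have v2 : 0 < v 0 k0 ^+ 2 by rewrite lt_def sqrf_eq0 vk0 sqr_ge0.
have lt : \sum_k v 0 k ^+ 2 * Rt R e k < B * \sum_j v 0 j ^+ 2.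
  rewrite mulr_sumr -subr_gt0 -sumrB (bigD1 k0) //= ltr_wpDr //.
    apply: sumr_ge0 => k _; have := hR k; have := sqr_ge0 (v 0 k); nra.
  have := hR k0; nra.
have a2 : a ^+ 2 < B.
  have : a ^+ 2 * \sum_j v 0 j ^+ 2 < B * \sum_j v 0 j ^+ 2 by apply: le_lt_trans hq lt.
  by rewrite ltr_pM2r.
have EB : B = n%:R - 7%:R / 2%:R.
  by rewrite /B natrB; [field|lia].
rewrite -EB.
apply: le_lt_trans (ler_norm a) _.
rewrite -sqrtr_sqr ltr_sqrt //.
apply: le_lt_trans a2; exact: sqr_ge0.
Qed.
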